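(* Let $a,\hat c$ be real with $a\ne0,1$, and let $\mathcal F=(F_1,F_2)$ be a pair of finite sets of positive integers. Then the polynomials $m_n^{a,\hat c;\mathcal F}$, $n\in\sigma_{\mathcal F}$, are common eigenfunctions of the second order difference operator $D_{\mathcal F}=h_{-1}(x)\mathfrak S_{-1}+h_0(x)\mathfrak S_0+h_1(x)\mathfrak S_1$, where $h_{-1}(x)=\frac{x\,\Omega^{a,\hat c}_{\mathcal F}(x+1)}{(a-1)\Omega^{a,\hat c}_{\mathcal F}(x)}$, $h_0(x)=-\frac{(1+a)(x+k)+a\hat c}{a-1}+u_{\mathcal F}+\Delta\Big(\frac{a(x+\hat c+k-1)\Lambda^{a,\hat c}_{\mathcal F}(x)}{(a-1)\Omega^{a,\hat c}_{\mathcal F}(x)}\Big)$, $h_1(x)=\frac{a(x+\hat c+k)\Omega^{a,\hat c}_{\mathcal F}(x)}{(a-1)\Omega^{a,\hat c}_{\mathcal F}(x+1)}$, and $D_{\mathcal F}(m_n^{a,\hat c;\mathcal F})=n\,m_n^{a,\hat c;\mathcal F}$ for $n\in\sigma_{\mathcal F}$.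
   Context: $k_i=|F_i|$, $k=k_1+k_2$. Meixner polynomials $m_n^{a,c}(x)=\frac{a^n}{(1-a)^n}\sum_{j=0}^n a^{-j}\binom{x}{j}\binom{-x-c}{n-j}$. $\Omega^{a,c}_{\mathcal F}(x)$ is the $k\times k$ determinant with rows $\big(m_f^{a,c}(x+j-1)\big)_{j=1}^k$ for $f\in F_1$ (increasing), followed by rows $\big(m_f^{1/a,c}(x+j-1)/a^{j-1}\big)_{j=1}^k$ for $f\in F_2$. $\Lambda^{a,c}_{\mathcal F}(x)$ is the $k\times k$ determinant obtained from $\Omega^{a,c}_{\mathcal F}(x)$ by replacing the last column ($j=k$, entries at $x+k-1$) by the entries $m_f^{a,c}(x+k)$ for $f\in F_1$ and $m_f^{1/a,c}(x+k)/a^k$ for $f\in F_2$. $u_{\mathcal F}=\sum_{f\in F_1}f+\sum_{f\in F_2}f-\binom{k_1+1}{2}-\binom{k_2}{2}$; $\sigma_{\mathcal F}=\{u_{\mathcal F},u_{\mathcal F}+1,\dots\}\setminus\{u_{\mathcal F}+f:f\in F_1\}$. For $n\in\sigma_{\mathcal F}$, $m_n^{a,\hat c;\mathcal F}(x)$ is the $(k+1)\times(k+1)$ determinant with first row $\big(m^{a,\hat c}_{n-u_{\mathcal F}}(x+j-1)\big)_{j=1}^{k+1}$, then rows $\big(m_f^{a,\hat c}(x+j-1)\big)_{j=1}^{k+1}$, $f\in F_1$, then rows $\big(m_f^{1/a,\hat c}(x+j-1)/a^{j-1}\big)_{j=1}^{k+1}$, $f\in F_2$. $\mathfrak S_l p(x)=p(x+l)$,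 $\Delta f(x)=f(x+1)-f(x)$. *)

(* Defs.v *)
From mathcomp Require Import all_boot all_order all_algebra.
Set Implicit Arguments. Unset Strict Implicit. Unset Printing Implicit Defensive.
Import Order.TTheory GRing.Theory Num.Theory.
Local Open Scope ring_scope.

Definition gbinom (R : realFieldType) (y : R) (j : nat) : R :=
  (\prod_(i < j) (y - i%:R)) / (j`!)%:R.

Definition meixner (R : realFieldType) (a c : R) (n : nat) (x : R) : R :=
  (a ^+ n / (1 - a) ^+ n) *
  \sum_(j < n.+1) (a ^- j * gbinom x j * gbinom (- x - c) (n - j)).

(* Entry of row i (0-indexed), at shift t : row i < size F1 is
   m_{F1_i}^{a,c}(x+t); row size F1 + i' is m_{F2_i'}^{1/a,c}(x+t)/a^t. *)
Definition rowEntry (R : realFieldType) (a c : R) (F1 F2 : seq nat)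
  (i t : nat) (x : R) : R :=
  if (i < size F1)%N then meixner a c (nth 0%N F1 i) (x + t%:R)
  else meixner a^-1 c (nth 0%N F2 (i - size F1)) (x + t%:R) / a ^+ t.

Definition kF (F1 F2 : seq nat) : nat := (size F1 + size F2)%N.

Definition Omega (R : realFieldType) (a c : R) (F1 F2 : seq nat) (x : R) : R :=
  \det (\matrix_(i < kF F1 F2, j < kF F1 F2) rowEntry a c F1 F2 i j x).

(* Last column (j = k-1, shift k-1) replaced by shift k.  For k = 0 there is
   no column to replace; we set Lambda = 0. *)
Definition Lambda (R : realFieldType) (a c : R) (F1 F2 : seq nat) (x : R) : R :=
  if kF F1 F2 == 0%N then 0 else
  \det (\matrix_(i < kF F1 F2, j < kF F1 F2)
          rowEntry a c F1 F2 i (if j == (kF F1 F2).-1 :> nat then kF F1 F2 else j) x).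

(* u_F = sum F1 + sum F2 - C(k1+1,2) - C(k2,2)  (always >= 0 for sets of
   positive integers, so computing in nat is exact). *)
Definition uF (F1 F2 : seq nat) : nat :=
  (sumn F1 + sumn F2 - 'C((size F1).+1, 2) - 'C(size F2, 2))%N.

Definition in_sigmaF (F1 F2 : seq nat) (n : nat) : bool :=
  (uF F1 F2 <= n)%N && ((n - uF F1 F2)%N \notin F1).

Definition meixnerF (R : realFieldType) (a c : R) (F1 F2 : seq nat) (n : nat)
  (x : R) : R :=
  \det (\matrix_(i < (kF F1 F2).+1, j < (kF F1 F2).+1)
     (if i == 0%N :> nat then meixner a c (n - uF F1 F2) (x + j%:R)
      else rowEntry a c F1 F2 i.-1 j x)).

Definition hm1 (R : realFieldType) (a c : R) (F1 F2 : seq nat) (x : R) : R :=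
  x * Omega a c F1 F2 (x + 1) / ((a - 1) * Omega a c F1 F2 x).

Definition h1 (R : realFieldType) (a c : R) (F1 F2 : seq nat) (x : R) : R :=
  a * (x + c + (kF F1 F2)%:R) * Omega a c F1 F2 x
  / ((a - 1) * Omega a c F1 F2 (x + 1)).

Definition gF (R : realFieldType) (a c : R) (F1 F2 : seq nat) (x : R) : R :=
  a * (x + c + (kF F1 F2)%:R - 1) * Lambda a c F1 F2 x
  / ((a - 1) * Omega a c F1 F2 x).

Definition h0 (R : realFieldType) (a c : R) (F1 F2 : seq nat) (x : R) : R :=
  - (((1 + a) * (x + (kF F1 F2)%:R) + a * c) / (a - 1)) + (uF F1 F2)%:R
  + (gF a c F1 F2 (x + 1) - gF a c F1 F2 x).

Definition DF (R : realFieldType) (a c : R) (F1 F2 : seq nat) (p : R -> R)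
  (x : R) : R :=
  hm1 a c F1 F2 x * p (x - 1) + h0 a c F1 F2 x * p x + h1 a c F1 F2 x * p (x + 1).

(* Main.v *)
Require Import Defs.
From mathcomp Require Import all_boot all_order all_algebra.
From mathcomp Require Import ring zify.
Import Order.TTheory GRing.Theory Num.Theory.
Local Open Scope ring_scope.
Set Implicit Arguments. Unset Strict Implicit. Unset Printing Implicit Defensive.

Section GB.
Variable R : realFieldType.
Implicit Types (y z : R).

Lemma natr_neq0 (n : nat) : (n.+1%:R : R) != 0.
Proof. by rewrite pnatr_eq0. Qed.

Lemma fact_neq0 (n : nat) : ((n`!)%:R : R) != 0.
Proof. by rewrite pnatr_eq0 -lt0n fact_gt0. Qed.

Lemma gb0 y : gbinom y 0 = 1.
Proof. by rewrite /gbinom big_ord0 fact0 divr1. Qed.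

Lemma gbP1 y j : j.+1%:R * gbinom y j.+1 = (y - j%:R) * gbinom y j.
Proof.
rewrite /gbinom big_ord_recr /= factS natrM.
have h1 := natr_neq0 j; have h2 := fact_neq0 j.
field; rewrite ?h2 /= addrC natr1 /=; try done.
Qed.

Lemma gbP2 y j : j.+1%:R * gbinom (y + 1) j.+1 = (y + 1) * gbinom y j.
Proof.
rewrite /gbinom big_ord_recl /= factS natrM subr0.
have -> : \prod_(i < j) (y + 1 - (bump 0 i)%:R) = \prod_(i < j) (y - i%:R).
  by apply: eq_bigr => i _; rewrite /bump /= add1n -addn1 natrD; ring.
have h1 := natr_neq0 j; have h2 := fact_neq0 j.
field; rewrite ?h2 /= addrC natr1 /=; try done.
Qed.

Lemma gbP3 y j : y * gbinom (y - 1) j = (y - j%:R) * gbinom y j.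
Proof.
rewrite -gbP1.
have := gbP2 (y - 1) j; rewrite subrK => <-.
by [].
Qed.

Lemma gbPascal z j : gbinom (z + 1) j.+1 = gbinom z j.+1 + gbinom z j.
Proof.
have h1 := natr_neq0 j.
apply: (mulfI h1); rewrite mulrDr gbP2 gbP1.
rewrite -[j.+1]addn1 natrD; ring.
Qed.

Lemma gbP3' z m : - z * gbinom (z - 1) m = (- z + m%:R) * gbinom z m.
Proof. by rewrite mulNr gbP3 -mulNr opprB addrC. Qed.

End GB.

Section Mx.
Variable R : realFieldType.
Implicit Types (y z c : R).
Opaque gbinom.

Definition TT y c n j : R := gbinom y j * gbinom (- y - c) (n - j).

Lemma L1 y c n j : (j <= n)%N ->
  y * (gbinom (y - 1) j * gbinom (- (y - 1) - c) (n - j)) =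
  (y - j%:R) * TT y c n j + (if (j < n)%N then j.+1%:R * TT y c n j.+1 else 0).
Proof.
move=> hj; rewrite /TT mulrA gbP3.
have -> : - (y - 1) - c = (- y - c) + 1 by ring.
case: ltnP => hjn.
  rewrite -(subnSK hjn) gbPascal.
  have h := gbP1 y j; move: h.
  generalize (gbinom y j.+1) (gbinom y j) (gbinom (- y - c) (n - j.+1).+1)
    (gbinom (- y - c) (n - j.+1)) => g1 g0 b1 b0 h.
  have -> : j.+1%:R * (g1 * b0) = (j.+1%:R * g1) * b0 by ring.
  rewrite h; ring.
have -> : j = n by apply/eqP; rewrite eqn_leq hj hjn.
by rewrite subnn !gb0 addr0 !mulr1.
Qed.

Lemma L2 y c n j : (j <= n)%N ->
  (y + c) * (gbinom (y + 1) j * gbinom (- (y + 1) - c) (n - j)) =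
  (y + c + (n - j)%:R) * TT y c n j
  - (if (0 < j)%N then (n - j).+1%:R * TT y c n j.-1 else 0).
Proof.
move=> hj; rewrite /TT.
have -> : - (y + 1) - c = (- y - c) - 1 by ring.
have e : (y + c) * gbinom (- y - c - 1) (n - j) =
         (y + c + (n - j)%:R) * gbinom (- y - c) (n - j).
  by rewrite (_ : y + c = - (- y - c)); [rewrite gbP3' | ring].
case: j hj e => [|j] hj e.
  by rewrite !gb0 subr0 !mul1r e.
rewrite /= gbPascal.
have hs : (n - j = (n - j.+1).+1)%N by rewrite subnSK.
rewrite hs.
set m := (n - j.+1)%N.
transitivity ((gbinom y j.+1 + gbinom y j) * ((y + c) * gbinom (- y - c - 1) m)).
  ring.
rewrite e.
have -> : m.+1%:R * (gbinom y j * gbinom (- y - c) m.+1)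
        = gbinom y j * (m.+1%:R * gbinom (- y - c) m.+1) by ring.
rewrite gbP1; ring.
Qed.


Definition Ssum (a c : R) n x := \sum_(j < n.+1) (a ^- j * gbinom x j * gbinom (- x - c) (n - j)).

Lemma meixnerS a c n x : meixner a c n x = a ^+ n / (1 - a) ^+ n * Ssum a c n x.
Proof. by []. Qed.

Definition GG a y c n j : R :=
  (if (0 < j)%N && (j <= n)%N then a * a ^- j * j%:R * TT y c n j else 0) +
  (if j is j'.+1 then a ^- j' * (n - j')%:R * TT y c n j' else 0).

Lemma term_eq a y c n j : a != 0 -> (j <= n)%N ->
  a ^- j * (y * (gbinom (y - 1) j * gbinom (- (y - 1) - c) (n - j))
     - ((1 + a) * y + a * c) * TT y c n j
     + a * ((y + c) * (gbinom (y + 1) j * gbinom (- (y + 1) - c) (n - j))))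
  = (a - 1) * n%:R * (a ^- j * TT y c n j) + (GG a y c n j.+1 - GG a y c n j).
Proof.
move=> a0 hj; rewrite L1 // L2 // /GG /=.
rewrite natrB //.
case: j hj => [|j] hj /=.
  rewrite expr0 invr1 !mul1r !subr0 !addr0 subr0 expr1.
  by case: ifP => _; field.
rewrite hj /= -[(n - j.+1).+1]addn1 natrD !natrB ?(ltnW hj) //.
rewrite !exprS.
by case: ifP => _; field; rewrite ?a0 //= expf_neq0.
Qed.



Lemma Ssum_eq a c n y : a != 0 ->
  y * Ssum a c n (y - 1) - ((1 + a) * y + a * c) * Ssum a c n y
  + a * (y + c) * Ssum a c n (y + 1) = (a - 1) * n%:R * Ssum a c n y.
Proof.
move=> a0; rewrite /Ssum.
transitivity (\sum_(j < n.+1) (a ^- j * (y * (gbinom (y - 1) j * gbinom (- (y - 1) - c) (n - j))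
     - ((1 + a) * y + a * c) * TT y c n j
     + a * ((y + c) * (gbinom (y + 1) j * gbinom (- (y + 1) - c) (n - j)))))).
  rewrite !mulr_sumr -sumrB -big_split /=; apply: eq_bigr => j _; rewrite /TT; ring.
transitivity (\sum_(j < n.+1) ((a - 1) * n%:R * (a ^- j * TT y c n j) +
               (GG a y c n j.+1 - GG a y c n j))).
  by apply: eq_bigr => j _; apply: term_eq => //; rewrite -ltnS.
rewrite big_split /= -(big_mkord xpredT (fun j => GG a y c n j.+1 - GG a y c n j)).
rewrite telescope_sumr // /GG /= ltnn subnn mulr0 mul0r !addr0 subrr addr0.
rewrite mulr_sumr; apply: eq_bigr => j _; rewrite /TT; ring.
Qed.

Lemma meixner_eq a c n y : a != 0 ->
  y * meixner a c n (y - 1) - ((1 + a) * y + a * c) * meixner a c n y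
  + a * (y + c) * meixner a c n (y + 1) = (a - 1) * n%:R * meixner a c n y.
Proof.
move=> a0; rewrite !meixnerS.
transitivity (a ^+ n / (1 - a) ^+ n * (y * Ssum a c n (y - 1) - ((1 + a) * y + a * c) * Ssum a c n y
  + a * (y + c) * Ssum a c n (y + 1))); first ring.
rewrite Ssum_eq //; ring.
Qed.

End Mx.

Section Det.
Variable R : fieldType.
Variable k : nat.
Variable Y : nat -> nat -> R.

Definition Om (o : nat) : R := \det (\matrix_(i < k, j < k) Y i (j + o)%N).
Definition La (o : nat) : R := if k == 0%N then 0 else
  \det (\matrix_(i < k, j < k) Y i ((if j == k.-1 :> nat then k else j) + o)%N).
Definition PM (r : nat -> R) (o : nat) : 'M[R]_(k.+1) :=
  \matrix_(i < k.+1, j < k.+1) (if i == 0%N :> nat then r (j + o)%N else Y i.-1 (j + o)%N).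
Definition Pd r o := \det (PM r o).
Definition Kc (o j : nat) : R :=
  (-1) ^+ j * \det (\matrix_(i < k, j' < k) Y i (bump j j' + o)%N).

Lemma Pd_exp r o : Pd r o = \sum_(j < k.+1) r (j + o)%N * Kc o j.
Proof.
rewrite /Pd (expand_det_row _ ord0); apply: eq_bigr => j _.
rewrite /cofactor /Kc add0n !mxE /=; congr (_ * (_ * \det _)).
by apply/matrixP => i' j'; rewrite !mxE lift0 /=.
Qed.

Lemma Pd_Y i o : (i < k)%N -> Pd (Y i) o = 0.
Proof.
move=> hi; apply: (@determinant_alternate _ _ _ ord0 (Ordinal (hi : (i.+1 < k.+1)%N))) => //.
by move=> j; rewrite !mxE.
Qed.

Lemma Pd_ext r1 r2 o : (forall j, (j < k.+1)%N -> r1 (j + o)%N = r2 (j + o)%N) ->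
  Pd r1 o = Pd r2 o.
Proof. by move=> h; rewrite !Pd_exp; apply: eq_bigr => j _; rewrite h. Qed.

Lemma Pd_lin r (w : 'I_k -> R) o :
  Pd (fun t => r t - \sum_(i < k) w i * Y i t) o = Pd r o.
Proof.
rewrite !Pd_exp.
under eq_bigr do rewrite mulrBl.
rewrite sumrB [X in _ - X](_ : _ = 0) ?subr0 //.
under eq_bigr do rewrite mulr_suml.
rewrite exchange_big /= big1 // => i _.
transitivity (w i * Pd (Y i) o); last by rewrite Pd_Y // mulr0.
rewrite Pd_exp mulr_sumr; apply: eq_bigr => j _; ring.
Qed.

Lemma Kc0 o : Kc o 0 = Om o.+1.
Proof.
rewrite /Kc /Om expr0 mul1r; congr (\det _); apply/matrixP => i j.
by rewrite !mxE /bump leq0n add1n addnS.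
Qed.

Lemma Kck o : Kc o k = (-1) ^+ k * Om o.
Proof.
rewrite /Kc /Om; congr (_ * \det _); apply/matrixP => i j.
by rewrite !mxE /bump leqNgt ltn_ord add0n.
Qed.

Lemma Kck1 o : (0 < k)%N -> Kc o k.-1 = (-1) ^+ k.-1 * La o.
Proof.
move=> hk; rewrite /Kc /La; move: (hk); rewrite lt0n => /negbTE ->.
congr (_ * \det _); apply/matrixP => i j; rewrite !mxE /bump.
case: eqP => [->|hne]; first by rewrite leqnn add1n prednK.
have hj : (j < k.-1)%N.
  rewrite ltn_neqAle; apply/andP; split; first by apply/eqP.
  by rewrite -ltnS prednK.
by rewrite leqNgt hj add0n.
Qed.

End Det.

Section Key.
Variable R : fieldType.

Lemma key0 (k : nat) (Y : nat -> nat -> R) (al be ga q : nat -> R) :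
  (forall t, (0 < t <= k)%N -> q t = 0) ->
  al 1 * Om k Y 2 ^+ 2 * Pd k Y q 0
  + (be k.+1 * Om k Y 1 * Om k Y 2 + ga k.+1 * La k Y 2 * Om k Y 1
     - ga k * La k Y 1 * Om k Y 2) * Pd k Y q 1
  + ga k.+1 * Om k Y 1 ^+ 2 * Pd k Y q 2
  = Om k Y 1 * Om k Y 2 * Pd k Y (fun t => al t * q t.-1 + be t * q t + ga t * q t.+1) 1.
Proof.
case: k Y => [|k] Y hq.
  rewrite /Om /La /Pd !det_mx00 !det_mx11 !mxE /=; ring.
rewrite !Pd_exp.
rewrite big_ord_recl /= big1 ?addr0; last first.
  by move=> j _; rewrite /= hq ?mulr0 ?mul0r //; have := ltn_ord j; rewrite /bump; lia.
rewrite [X in _ + _ * X + _ = _]big_ord_recr /= big1 ?add0r; last first.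
  by move=> j _; rewrite /= hq ?mulr0 ?mul0r //; have := ltn_ord j; rewrite /bump; lia.
rewrite [X in _ + _ * X = _]big_ord_recr [X in _ + _ * (X + _) = _]big_ord_recr /=.
rewrite big1 ?add0r; last first.
  by move=> j _; rewrite /= hq ?mulr0 ?mul0r //; have := ltn_ord j; rewrite /bump; lia.
under [X in _ = _ * X]eq_bigr do rewrite !mulrDl.
rewrite !big_split /=.
rewrite [X in _ = _ * (X + _ + _)]big_ord_recl /= big1 ?addr0; last first.
  by move=> j _; rewrite /= hq ?mulr0 ?mul0r //; have := ltn_ord j; rewrite /bump; lia.
rewrite [X in _ = _ * (_ + X + _)]big_ord_recr /= big1 ?add0r; last first.
  by move=> j _; rewrite /= hq ?mulr0 ?mul0r //; have := ltn_ord j; rewrite /bump; lia.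
rewrite [X in _ = _ * (_ + _ + X)]big_ord_recr [X in _ = _ * (_ + _ + (X + _))]big_ord_recr /=.
rewrite big1 ?add0r; last first.
  by move=> j _; rewrite /= hq ?mulr0 ?mul0r //; have := ltn_ord j; rewrite /bump; lia.
rewrite /= !Kc0 !Kck.
have e1 := Kck1 (k:=k.+1) Y 1 (ltn0Sn k); have e2 := Kck1 (k:=k.+1) Y 2 (ltn0Sn k).
rewrite /= in e1 e2; rewrite e1 e2.
rewrite !addn0 !add0n !addn1 !addn2 !exprS; ring.
Qed.

Lemma Pd_scale k (Y : nat -> nat -> R) r (l : R) o : Pd k Y (fun t => l * r t) o = l * Pd k Y r o.
Proof. by rewrite !Pd_exp mulr_sumr; apply: eq_bigr => j _; rewrite mulrA. Qed.

Lemma key (k : nat) (Y : nat -> nat -> R) (al be ga lam p : nat -> R) (lam0 : R) :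
  (forall i t, (i < k)%N -> (0 < t <= k.+1)%N ->
     lam i * Y i t = al t * Y i t.-1 + be t * Y i t + ga t * Y i t.+1) ->
  (forall t, (0 < t <= k.+1)%N ->
     lam0 * p t = al t * p t.-1 + be t * p t + ga t * p t.+1) ->
  Om k Y 1 != 0 ->
  al 1 * Om k Y 2 ^+ 2 * Pd k Y p 0
  + (be k.+1 * Om k Y 1 * Om k Y 2 + ga k.+1 * La k Y 2 * Om k Y 1
     - ga k * La k Y 1 * Om k Y 2) * Pd k Y p 1
  + ga k.+1 * Om k Y 1 ^+ 2 * Pd k Y p 2
  = lam0 * Om k Y 1 * Om k Y 2 * Pd k Y p 1.
Proof.
move=> HY Hp Om0.
pose M := \matrix_(i < k, j < k) Y i (j + 1)%N.
have uM : M \in unitmx by rewrite unitmxE unitfE.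
pose cv := (\row_(j < k) p (j + 1)%N) *m invmx M.
pose q t := p t - \sum_(i < k) cv 0 i * Y i t.
have hq : forall t, (0 < t <= k)%N -> q t = 0.
  move=> t /andP[t0 tk].
  have ht : (t.-1 < k)%N by rewrite prednK.
  have := mulmxKV uM (\row_(j < k) p (j + 1)%N).
  move/matrixP/(_ 0 (Ordinal ht)); rewrite !mxE /= addn1 prednK // => h.
  rewrite /q -{1}h; apply/eqP; rewrite subr_eq0; apply/eqP; apply: eq_bigr => i _.
  by rewrite !mxE /= addn1 prednK.
have e0 : forall o, Pd k Y p o = Pd k Y q o.
  by move=> o; symmetry; exact: (@Pd_lin _ k Y p (fun i => cv 0 i) o).
rewrite !e0 key0 // -(e0 1).
transitivity (Om k Y 1 * Om k Y 2 * (lam0 * Pd k Y p 1)); last ring.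
congr (_ * _); rewrite -Pd_scale.
transitivity (Pd k Y (fun t => (al t * p t.-1 + be t * p t + ga t * p t.+1)
                 - \sum_(i < k) (cv 0 i * lam i) * Y i t) 1).
  apply: Pd_ext => j hj.
  have ht : (0 < j + 1 <= k.+1)%N by rewrite addn1.
  rewrite /q.
  have -> : \sum_(i < k) cv 0 i * lam i * Y i (j + 1)%N =
    \sum_(i < k) (al (j + 1)%N * (cv 0 i * Y i (j + 1).-1) +
                  be (j + 1)%N * (cv 0 i * Y i (j + 1)%N) +
                  ga (j + 1)%N * (cv 0 i * Y i (j + 1).+1)).
    apply: eq_bigr => i _; rewrite -mulrA HY //; ring.
  rewrite !big_split /= -!mulr_sumr; ring.
rewrite (@Pd_lin _ k Y _ (fun i => cv 0 i * lam i) 1); apply: Pd_ext => j hj.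
by rewrite Hp // addn1.
Qed.

End Key.

Lemma det_rowscale (R : comPzRingType) n (A B : 'M[R]_n) (d : 'I_n -> R) :
  (forall i j, A i j = d i * B i j) -> \det A = \prod_i d i * \det B.
Proof.
move=> h; have -> : A = diag_mx (\row_i d i) *m B.
  by rewrite mul_diag_mx; apply/matrixP => i j; rewrite !mxE h.
by rewrite det_mulmx det_diag; congr (_ * _); apply: eq_bigr => i _; rewrite mxE.
Qed.

Section Glue.
Variable R : realFieldType.
Variables (a c : R) (F1 F2 : seq nat).
Hypothesis a0 : a != 0.
Hypothesis a1 : a != 1.

Lemma rec_from (y l M0 M1 M2 : R) :
  y * M0 - ((1 + a) * y + a * c) * M1 + a * (y + c) * M2 = (a - 1) * l * M1 ->
  l * M1 = y / (a - 1) * M0 + (- ((1 + a) * y + a * c) / (a - 1)) * M1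
           + a * (y + c) / (a - 1) * M2.
Proof.
move=> h; have a1' : a - 1 != 0 by rewrite subr_eq0.
have -> : l * M1 = ((a - 1) * l * M1) / (a - 1) by field; rewrite a1'.
rewrite -h; field; by rewrite a1'.
Qed.

Lemma rec_from2 (y f W0 W1 W2 A : R) : A != 0 ->
  y * W0 - ((1 + a^-1) * y + a^-1 * c) * W1 + a^-1 * (y + c) * W2 = (a^-1 - 1) * f * W1 ->
  - (f + c) * (W1 / (a * A)) = y / (a - 1) * (W0 / A)
    + (- ((1 + a) * y + a * c) / (a - 1)) * (W1 / (a * A))
    + a * (y + c) / (a - 1) * (W2 / (a * (a * A))).
Proof.
move=> A0 h; have a1' : a - 1 != 0 by rewrite subr_eq0.
apply/eqP; rewrite -subr_eq0; apply/eqP.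
transitivity (1 / ((a - 1) * A) * (((a^-1 - 1) * f * W1) -
   (y * W0 - ((1 + a^-1) * y + a^-1 * c) * W1 + a^-1 * (y + c) * W2))).
  by field; rewrite ?a0 ?a1' ?A0.
by rewrite h subrr mulr0.
Qed.

Definition sc (i : nat) : R := if (i < size F1)%N then 1 else a.

Lemma row_shift i t z :
  rowEntry a c F1 F2 i t (z + 1) = sc i * rowEntry a c F1 F2 i t.+1 z.
Proof.
rewrite /rowEntry /sc; case: ifP => _.
  by rewrite mul1r -natr1 (_ : z + 1 + t%:R = z + (t%:R + 1)) //; ring.
rewrite (_ : z + 1 + t%:R = z + t.+1%:R); last by rewrite -natr1; ring.
rewrite exprS; field; rewrite a0 /= expf_neq0 //.
Qed.


Lemma sc_neq0 i : sc i != 0.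
Proof. by rewrite /sc; case: ifP => _; [exact: oner_neq0 | exact: a0]. Qed.

Lemma prod_mF k (d : 'I_k.+1 -> R) : (forall i : 'I_k.+1, d i = if i == 0 :> nat then 1 else sc i.-1) ->
  \prod_i d i = \prod_(i < k) sc i.
Proof. by move=> h; rewrite big_ord_recl h mul1r; apply: eq_bigr => i _; rewrite h. Qed.

End Glue.

Unset Implicit Arguments.

Theorem mainTheorem7 (R : realFieldType) (a c : R) (F1 F2 : seq nat) :
  a != 0 -> a != 1 ->
  sorted ltn F1 -> sorted ltn F2 ->
  all (fun f => 0 < f)%N F1 -> all (fun f => 0 < f)%N F2 ->
  forall n : nat, in_sigmaF F1 F2 n ->
  forall x : R, Omega a c F1 F2 x != 0 -> Omega a c F1 F2 (x + 1) != 0 ->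
  DF a c F1 F2 (meixnerF a c F1 F2 n) x = n%:R * meixnerF a c F1 F2 n x.
Proof.
move=> a0 a1 _ _ _ _ n /andP[hun _] x.
rewrite -[x](subrK 1); move: (x - 1) => {x} b.
set k := kF F1 F2.
set u := uF F1 F2.
pose Y := fun i t => rowEntry a c F1 F2 i t b.
pose p := fun t : nat => meixner a c (n - u) (b + t%:R).
pose S := \prod_(i < k) sc a F1 i.
have S0 : S != 0 by apply/prodf_neq0 => i _; apply: sc_neq0.
have Om1E : Omega a c F1 F2 (b + 1) = S * Om k Y 1.
  rewrite /Omega (@det_rowscale _ _ _ (\matrix_(i < k, j < k) Y i (j + 1)%N) (fun i => sc a F1 i)) //.
  by move=> i j; rewrite !mxE row_shift // /Y addn1.
have Om2E : Omega a c F1 F2 (b + 1 + 1) = S * S * Om k Y 2.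
  rewrite /Omega (@det_rowscale _ _ _ (\matrix_(i < k, j < k) rowEntry a c F1 F2 i j.+1 (b + 1)) (fun i => sc a F1 i)); last first.
    by move=> i j; rewrite !mxE row_shift //.
  rewrite (@det_rowscale _ _ _ (\matrix_(i < k, j < k) Y i (j + 2)%N) (fun i => sc a F1 i)) ?mulrA //.
  by move=> i j; rewrite !mxE row_shift // /Y addn2.
have La1E : Lambda a c F1 F2 (b + 1) = S * La k Y 1.
  rewrite /Lambda /La; case: ifP => _; first by rewrite mulr0.
  rewrite (@det_rowscale _ _ _ (\matrix_(i < k, j < k) Y i ((if j == k.-1 :> nat then k else j) + 1)%N) (fun i => sc a F1 i)) //.
  by move=> i j; rewrite !mxE row_shift // /Y addn1.
have La2E : Lambda a c F1 F2 (b + 1 + 1) = S * S * La k Y 2.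
  rewrite /Lambda /La; case: ifP => _; first by rewrite mulr0.
  rewrite (@det_rowscale _ _ _ (\matrix_(i < k, j < k) rowEntry a c F1 F2 i (if j == k.-1 :> nat then k else j).+1 (b + 1)) (fun i => sc a F1 i)); last first.
    by move=> i j; rewrite !mxE row_shift.
  rewrite (@det_rowscale _ _ _ (\matrix_(i < k, j < k) Y i ((if j == k.-1 :> nat then k else j) + 2)%N) (fun i => sc a F1 i)) ?mulrA //.
  by move=> i j; rewrite !mxE row_shift // /Y addn2.
have P0E : meixnerF a c F1 F2 n b = Pd k Y p 0.
  rewrite /meixnerF /Pd /PM; congr (\det _); apply/matrixP => i j.
  by rewrite !mxE /p /Y !addn0.
have P1E : meixnerF a c F1 F2 n (b + 1) = S * Pd k Y p 1.
  rewrite /meixnerF /Pd (@det_rowscale _ _ _ (PM k Y p 1) (fun i : 'I_k.+1 => if i == 0 :> nat then 1 else sc a F1 i.-1)).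
    by rewrite (@prod_mF _ a F1 k (fun i : 'I_k.+1 => if i == 0 :> nat then 1 else sc a F1 i.-1)).
  move=> i j; rewrite !mxE /p /Y; case: ifP => _.
    by rewrite mul1r addn1 -natr1; congr (meixner _ _ _ _); ring.
  by rewrite row_shift // addn1.
have P2E : meixnerF a c F1 F2 n (b + 1 + 1) = S * S * Pd k Y p 2.
  rewrite /meixnerF (@det_rowscale _ _ _ (\matrix_(i < k.+1, j < k.+1)
      (if i == 0 :> nat then meixner a c (n - u) (b + 1 + j.+1%:R) else rowEntry a c F1 F2 i.-1 j.+1 (b + 1)))
      (fun i : 'I_k.+1 => if i == 0 :> nat then 1 else sc a F1 i.-1)); last first.
    move=> i j; rewrite !mxE; case: ifP => _.
      by rewrite mul1r -natr1; congr (meixner _ _ _ _); ring.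
    by rewrite row_shift.
  rewrite /Pd (@det_rowscale _ _ _ (PM k Y p 2) (fun i : 'I_k.+1 => if i == 0 :> nat then 1 else sc a F1 i.-1)); last first.
    move=> i j; rewrite !mxE /p /Y; case: ifP => _.
      by rewrite mul1r addn2 -!natr1; congr (meixner _ _ _ _); ring.
    by rewrite row_shift // addn2.
  by rewrite !(@prod_mF _ a F1 k (fun i : 'I_k.+1 => if i == 0 :> nat then 1 else sc a F1 i.-1)) // mulrA.
pose al := fun t : nat => (b + t%:R) / (a - 1).
pose be := fun t : nat => - ((1 + a) * (b + t%:R) + a * c) / (a - 1).
pose ga := fun t : nat => a * (b + t%:R + c) / (a - 1).
pose lam := fun i : nat => if (i < size F1)%N then ((nth 0%N F1 i)%:R : R)
                           else - ((nth 0%N F2 (i - size F1))%:R + c).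
have e1 : forall t : nat, b + t%:R = (b + t.+1%:R) - 1.
  by move=> t; rewrite [t.+1%:R]mulrSr; ring.
have e2 : forall t : nat, b + t.+2%:R = (b + t.+1%:R) + 1.
  by move=> t; rewrite [t.+2%:R]mulrSr; ring.
have HY : forall i t, (i < k)%N -> (0 < t <= k.+1)%N ->
    lam i * Y i t = al t * Y i t.-1 + be t * Y i t + ga t * Y i t.+1.
  move=> i [|t] hi //= _; rewrite /lam /Y /rowEntry /al /be /ga /=.
  case: ifP => _.
    rewrite (e1 t) (e2 t); apply: rec_from => //; exact: meixner_eq.
  rewrite (e1 t) (e2 t) !exprS; apply: rec_from2 => //.
    by rewrite expf_neq0.
  by apply: meixner_eq; rewrite invr_neq0.
have Hp : forall t, (0 < t <= k.+1)%N ->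
    (n - u)%:R * p t = al t * p t.-1 + be t * p t + ga t * p t.+1.
  move=> [|t] //= _; rewrite /p /al /be /ga /=.
  rewrite (e1 t) (e2 t); apply: rec_from => //; exact: meixner_eq.
move=> hO1 hO2.
have O1 : Om k Y 1 != 0 by move: hO1; rewrite Om1E mulf_eq0 negb_or => /andP[].
have O2 : Om k Y 2 != 0 by move: hO2; rewrite Om2E !mulf_eq0 !negb_or => /andP[].
have K := key HY Hp O1.
rewrite /al /be /ga /= in K.
have K' := K; move/eqP: K'; rewrite -subr_eq0 => /eqP K'.
have nE : n%:R = (n - u)%:R + u%:R :> R by rewrite -natrD subnK.
rewrite /DF /hm1 /h0 /h1 /gF addrK Om1E Om2E La1E La2E P0E P1E P2E nE.
have a1' : a - 1 != 0 by rewrite subr_eq0.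
apply/eqP; rewrite -subr_eq0; apply/eqP.
rewrite -(mulr0 (S / (Om k Y 1 * Om k Y 2))) -K'.
field.
by rewrite a1' O1 O2 S0.
Qed.
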